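(* Let $(P,Q)$ be a negative semistandard notched bitableau with at least one box, and let $b$ be the minimum of all entries of $Q$. Then $P$ is semistandard on $b$.
   Context: A notched tableau $P$ is a finite sequence of rows $P_1,\dots,P_r$ (top to bottom), each a left-justified (possibly empty) row of boxes filled with positive integers. It is row strict if entries strictly increase left to right in each row; a row of a row-strict tableau is identified with the set of its entries. A notched bitableau $(P,Q)$ is a pair of notched tableaux of the same shape (same number of rows and same row lengths). For finite multisets $A=\{a_1\le\dots\le a_k\}$, $B=\{b_1\le\dots\le b_k\}$ of positive integers of equal size, $A\le B$ means $a_i\le b_i$ for all $i$, and $A\lessdot B$ means $A,B$ nonempty and $a_i<b_i$ for all $i$. For finite multisets $A,B,C,D$ with $|A|+|D|=|B|+|C|$, ''$A-C\le B-D$'' means $A\sqcup D\le B\sqcup C$ ($\sqcup$ = multiset union). $(P,Q)$ is semistandard if both are row strict and $P_1-Q_1\le P_2-Q_2\le\cdots\le P_r-Q_r$; it is negative if $P_i\lessdot Q_i$ for all $i$. For a row-strict $P$ and $b\in\mathbb{N}$, $P^{<b}$ is obtained by deleting all entries $\ge b$ (these lie at the right ends of rows); $P$ is semistandard on $b$ if the row lengths of $P^{<b}$ weakly decrease from top to bottom and the entries of $P^{<b}$ weakly increase down each column. *)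

(* Defs.v *)
From mathcomp Require Import all_boot.
Set Implicit Arguments. Unset Strict Implicit. Unset Printing Implicit Defensive.

(* A notched tableau: a list of rows (top to bottom), each a list of entries
   (left to right); entries are positive integers. *)
Definition tableau := seq (seq nat).

Definition notched_tableau (P : tableau) : Prop :=
  forall r, r \in P -> forall x, x \in r -> 0 < x.

Definition same_shape (P Q : tableau) : Prop :=
  map size P = map size Q.

Definition row_strict (P : tableau) : Prop :=
  forall r, r \in P -> sorted ltn r.

Definition mle (A B : seq nat) : bool :=
  all2 leq (sort leq A) (sort leq B).

Definition mlt (A B : seq nat) : bool :=
  [&& A != [::], B != [::] & all2 ltn (sort leq A) (sort leq B)].

(* "A - C <= B - D" means A ⊔ D <= B ⊔ C *)
Definition mdiff_le (A C B D : seq nat) : bool := mle (A ++ D) (B ++ C).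

Definition nth_row (P : tableau) (i : nat) : seq nat := nth [::] P i.

Definition semistandard_bitableau (P Q : tableau) : Prop :=
  [/\ row_strict P, row_strict Q &
      forall i, i.+1 < size P ->
        mdiff_le (nth_row P i) (nth_row Q i) (nth_row P i.+1) (nth_row Q i.+1)].

Definition negative_bitableau (P Q : tableau) : Prop :=
  forall i, i < size P -> mlt (nth_row P i) (nth_row Q i).

Definition trunc_below (b : nat) (P : tableau) : tableau :=
  map (filter (fun x => x < b)) P.

Definition semistandard_on (b : nat) (P : tableau) : Prop :=
  let P' := trunc_below b P in
  (forall i, i.+1 < size P' -> size (nth_row P' i.+1) <= size (nth_row P' i)) /\
  (forall i j, i.+1 < size P' -> j < size (nth_row P' i.+1) ->
     nth 0 (nth_row P' i) j <= nth 0 (nth_row P' i.+1) j).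

(* Main.v *)
Require Import Defs.
From mathcomp Require Import all_boot.

Lemma filt_nil (b y : nat) (R : seq nat) :
  path leq y R -> b <= y -> [seq z <- y :: R | z < b] = [::].
Proof.
move=> hp hb.
have := order_path_min leq_trans hp => /allP hall.
rewrite /= ltnNge hb /=.
rewrite -(filter_pred0 R); apply: eq_in_filter => z /hall hz /=.
by rewrite ltnNge (leq_trans hb hz).
Qed.

Lemma abstract_lem (b : nat) (L R : seq nat) :
  sorted leq L -> sorted leq R -> all2 leq L R ->
  size [seq z <- R | z < b] <= size [seq z <- L | z < b] /\
  (forall j, j < size [seq z <- R | z < b] ->
     nth 0 [seq z <- L | z < b] j <= nth 0 [seq z <- R | z < b] j).
Proof.
elim: L R => [|x L IH] [|y R] //=.
move=> hL hR /andP [hxy hall].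
case: (ltnP y b) => hyb.
  have hxb : x < b by apply: leq_ltn_trans hxy hyb.
  rewrite hxb /=.
  have [h1 h2] := IH R (path_sorted hL) (path_sorted hR) hall.
  split; first by [].
  by case=> [|j] //= /h2.
have := @filt_nil b y R hR hyb; rewrite /= ltnNge hyb /= => ->.
by split.
Qed.

Lemma filt_sort (b : nat) (A B : seq nat) :
  sorted leq A -> (forall x, x \in B -> b <= x) ->
  [seq z <- sort leq (A ++ B) | z < b] = [seq z <- A | z < b].
Proof.
move=> hA hB.
rewrite filter_sort //; last exact: leq_trans; last exact: leq_total.
rewrite filter_cat.
have -> : [seq z <- B | z < b] = [::].
  rewrite -(filter_pred0 B); apply: eq_in_filter => z /hB hz /=.
  by rewrite ltnNge hz.
rewrite cats0 sorted_sort //; first exact: leq_trans.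
by apply: (sorted_filter leq_trans).
Qed.

Theorem lemma5p2 (P Q : tableau) (b : nat) :
  notched_tableau P -> notched_tableau Q -> same_shape P Q ->
  semistandard_bitableau P Q -> negative_bitableau P Q ->
  0 < size (flatten P) ->
  b \in flatten Q -> (forall x, x \in flatten Q -> b <= x) ->
  semistandard_on b P.
Proof.
move=> _ _ hsh [rsP rsQ hss] _ _ _ hmin.
have hsz : size Q = size P by rewrite -(size_map size Q) -hsh size_map.
have rowQ : forall i, i < size P -> forall x, x \in nth_row Q i -> b <= x.
  move=> i hi x hx; apply: hmin; apply/flattenP; exists (nth_row Q i) => //.
  by rewrite /nth_row mem_nth // hsz.
have rowP : forall i, i < size P -> sorted leq (nth_row P i).
  move=> i hi; apply: (sub_sorted (e := ltn)) => [x y /ltnW //|].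
  by apply: rsP; rewrite /nth_row mem_nth.
have key : forall i, i.+1 < size P ->
  size (filter (fun x => x < b) (nth_row P i.+1)) <=
    size (filter (fun x => x < b) (nth_row P i)) /\
  (forall j, j < size (filter (fun x => x < b) (nth_row P i.+1)) ->
     nth 0 (filter (fun x => x < b) (nth_row P i)) j <=
     nth 0 (filter (fun x => x < b) (nth_row P i.+1)) j).
  move=> i hi.
  have hi' : i < size P by apply: ltnW.
  have := hss i hi; rewrite /mdiff_le /mle => hall.
  have := @abstract_lem b _ _ (sort_sorted leq_total _) (sort_sorted leq_total _) hall.
  rewrite (@filt_sort b _ _ (rowP i hi') (rowQ i.+1 hi)).
  by rewrite (@filt_sort b _ _ (rowP i.+1 hi) (rowQ i hi')).
rewrite /semistandard_on /trunc_below size_map /nth_row.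
split.
  move=> i hi; rewrite !(nth_map [::]) //; last exact: ltnW.
  exact: (key i hi).1.
move=> i j hi; rewrite !(nth_map [::]) //; last exact: ltnW.
exact: (key i hi).2.
Qed.
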